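(* Let $F$ be an algebraically closed field of characteristic zero and $R$ a Rota–Baxter operator of nonzero weight $\lambda$ on $M_n(F)$. Then there exists an automorphism $\psi$ of $M_n(F)$ such that the matrix $R^{(\psi)}(1)=\psi^{-1}R\psi(1)$ is diagonal and, after possibly replacing $R$ by $\phi(R)=-R-\lambda\,\mathrm{id}$, the set of its diagonal entries equals $\{-p\lambda,(-p+1)\lambda,\dots,-\lambda,0,\lambda,\dots,q\lambda\}$ for some nonnegative integers $p,q$.
   Context: A linear operator $R$ on an algebra $A$ is a Rota–Baxter operator of weight $\lambda$ if $R(x)R(y)=R(R(x)y+xR(y)+\lambda xy)$ for all $x,y\in A$. For $\psi\in\mathrm{Aut}(A)$, $R^{(\psi)}=\psi^{-1}R\psi$ is again an RB-operator of weight $\lambda$, and so is $\phi(R)=-R-\lambda\,\mathrm{id}$. *)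

(* Defs.v *)
From HB Require Import structures.
From mathcomp Require Import all_boot all_order all_algebra.
Set Implicit Arguments. Unset Strict Implicit. Unset Printing Implicit Defensive.
Import Order.TTheory GRing.Theory Num.Theory.
Local Open Scope ring_scope.

(* Rota-Baxter operator of weight lam on an algebra A (R is assumed linear
   separately, via its type {linear A -> A}). *)
Definition is_RB (F : fieldType) (A : lalgType F) (lam : F) (R : A -> A) : Prop :=
  forall x y : A, R x * R y = R (R x * y + x * R y + lam *: (x * y)).

Definition phiRB (F : fieldType) (A : lmodType F) (lam : F) (R : A -> A) : A -> A :=
  fun x => - R x - lam *: x.

Definition is_alg_aut (F : fieldType) (A : lalgType F) (psi psiinv : A -> A) : Prop :=
  [/\ linear psi, monoid_morphism psi, cancel psi psiinv & cancel psiinv psi].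

Definition conjRB (A : Type) (psiinv R psi : A -> A) : A -> A :=
  fun x => psiinv (R (psi x)).

Definition diag_set_is (F : fieldType) (n : nat) (D : 'M[F]_n) (lam : F) (p q : nat) : Prop :=
  forall x : F, (exists i : 'I_n, D i i = x) <->
    (exists k : int, (- (p%:Z) <= k)%R /\ (k <= q%:Z)%R /\ x = k%:~R * lam).

(* Main.v *)
Require Import Defs.
From HB Require Import structures.
From mathcomp Require Import all_boot all_order all_algebra.
From mathcomp Require Import ring zify.
Import GRing.Theory Num.Theory.
Local Open Scope ring_scope.

Module Helpers.
Set Implicit Arguments. Unset Strict Implicit. Unset Printing Implicit Defensive.
Import Order.TTheory GRing.Theory Num.Theory.
Local Open Scope ring_scope.

Definition Dl (F : fieldType) (p : {poly F}) := p \Po ('X + 1) - p.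

Lemma Dl_horner (F : fieldType) (p : {poly F}) x : (Dl p).[x] = p.[x+1] - p.[x].
Proof. by rewrite /Dl hornerD hornerN horner_comp !hornerE. Qed.

Lemma deriv_Dl (F : fieldType) (p : {poly F}) : (Dl p)^`() = Dl (p^`()).
Proof.
by rewrite /Dl derivB deriv_comp derivD derivX derivC addr0 mulr1.
Qed.

Lemma natr_inj0 (F : fieldType) (charF0 : [pchar F] =i pred0) (i j : nat) :
  (i%:R = j%:R :> F) -> i = j.
Proof.
move/pcharf0P: charF0 => c0 e.
wlog ij : i j e / (i <= j)%N.
  by move=> W; case: (leqP i j) => h; [|symmetry]; apply: W => //; apply: ltnW.
have : ((j - i)%:R == 0 :> F) by rewrite natrB // e subrr.
by rewrite c0 subn_eq0 => h; apply/eqP; rewrite eqn_leq ij h.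
Qed.

Lemma natr_neq0 (F : fieldType) (charF0 : [pchar F] =i pred0) (i : nat) :
  (i.+1%:R != 0 :> F).
Proof. by move/pcharf0P: charF0 => ->. Qed.

Lemma roots_chain (F : fieldType) (charF0 : [pchar F] =i pred0)
  (m : {poly F}) (x : F) (s : F) N :
  m != 0 -> s != 0 -> (forall j, (j < N)%N -> root m (x + s * j%:R)) -> (N < size m)%N.
Proof.
move=> m0 s0 H.
have := max_poly_roots m0 (rs := [seq x + s * j%:R | j <- iota 0 N]).
rewrite size_map size_iota; apply.
  apply/allP => y /mapP[j]; rewrite mem_iota add0n => jN ->; exact: H.
rewrite map_inj_uniq ?iota_uniq // => i j /addrI /(mulfI s0).
exact: natr_inj0.
Qed.



Lemma size_Dl (F : fieldType) (p : {poly F}) : (size (Dl p) <= (size p).-1)%N.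
Proof.
have s2 : size ('X + 1 : {poly F}) = 2 by rewrite size_XaddC.
apply/leq_sizeP => j hj; rewrite /Dl coefB.
have sc := size_comp_poly2 p s2.
have lc : lead_coef (p \Po ('X + 1)) = lead_coef p * lead_coef ('X + 1 : {poly F}) ^+ (size p).-1 by apply: lead_coef_comp; rewrite s2.
rewrite lead_coefXaddC expr1n mulr1 in lc.
case: (ltnP (size p).-1 j) => hj2.
  have hj3 : (size p <= j)%N by case: (size p) hj2.
  by rewrite !nth_default ?subrr // sc.
have -> : j = (size p).-1 by apply/eqP; rewrite eqn_leq hj hj2.
by move: lc; rewrite /lead_coef sc => ->; rewrite subrr.
Qed.



Lemma Dl_scale (F : fieldType) c (p : {poly F}) : Dl (c *: p) = c *: Dl p.
Proof. by rewrite /Dl comp_polyZ scalerBr. Qed.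

Lemma h_shape (F : fieldType) (m g h : {poly F}) :
  (1 < size m)%N -> g = h * m -> Dl g = m -> (size g <= (size m).+1)%N ->
  size h = 2.
Proof.
move=> sm gE Dg sg.
have m0 : m != 0 by rewrite -size_poly_gt0 (ltn_trans _ sm).
have h0 : h != 0.
  apply: contra_eqN Dg => /eqP h0; rewrite gE h0 mul0r /Dl comp_poly0 subrr.
  by rewrite eq_sym.
move: sg; rewrite gE size_mul // => sg.
case: (ltnP 2 (size h)) => h2.
  by move: sg; rewrite -(ltn_predK sm) -(subnKC h2); lia.
case: (ltnP (size h) 2) => h1; last by apply/eqP; rewrite eqn_leq h1 h2.
have hc := size1_polyC (ltnSE h1).
have : (size (Dl g) <= (size m).-1)%N.
  by rewrite gE hc mul_polyC Dl_scale (leq_trans (size_scale_leq _ _)) // size_Dl.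
by rewrite Dg -(ltn_predK sm) ltnn.
Qed.



Lemma size2E (F : fieldType) (h : {poly F}) : size h = 2 ->
  h = (h`_0)%:P + h`_1 *: 'X.
Proof.
move=> sh; apply/polyP => i; rewrite coefD coefC coefZ coefX.
case: i => [|[|i]] /=; rewrite ?mulr0 ?addr0 ?add0r ?mulr1 //.
by rewrite nth_default // sh.
Qed.




Definition Sint (F : fieldType) (p q : nat) (x : F) : Prop :=
  exists k : int, (- (p%:Z) <= k)%R /\ (k <= q%:Z)%R /\ x = k%:~R.

Lemma chain_Sint (F : fieldType) (t kmax : nat) : (t <= kmax)%N -> forall y : F,
  (exists j, (j <= kmax)%N /\ y = j%:R - t%:R) <-> Sint t (kmax - t) y.
Proof.
move=> tk y; split.
  move=> [j [jk ->]]; exists (j%:Z - t%:Z); split; [|split]; try lia.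
  by rewrite intrB.
move=> [k [k1 [k2 ->]]].
have [j hj] : exists j : nat, k + t%:Z = j%:Z.
  by exists (absz (k + t%:Z)); rewrite gez0_abs //; lia.
exists j; split; first lia.
have -> : k = j%:Z - t%:Z by rewrite -hj; ring.
by rewrite intrB.
Qed.



Lemma roots_main (F : closedFieldType) (charF0 : [pchar F] =i pred0) (m h : {poly F}) :
  (1 < size m)%N -> size h = 2 -> Dl (h * m) = m -> (h * m).[0] = 0 ->
  (forall r, root m r -> m^`().[r] != 0) /\
  exists p q : nat, (forall x, root m x <-> Sint p q x) \/
                    (forall x, root m x <-> Sint p q (- x - 1)).
Proof.
move=> sm sh HD H0.
have m0 : m != 0 by rewrite -size_poly_gt0 (ltn_trans _ sm).
set c := h`_1; set d := h`_0.
have hE : forall x, h.[x] = d + c * x.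
  by move=> x; rewrite {1}(size2E sh) !hornerE mulrC.
have c0 : c != 0.
  have : lead_coef h != 0 by rewrite lead_coef_eq0 -size_poly_gt0 sh.
  by rewrite lead_coefE sh.
have E : forall x, m.[x] = h.[x+1] * m.[x+1] - h.[x] * m.[x].
  move=> x; have := congr1 (fun p => p.[x]) HD; rewrite /= Dl_horner !hornerM => e.
  by rewrite -{1}e.
have hd : h^`() = c%:P.
  by rewrite {1}(size2E sh) derivD derivC derivZ derivX add0r alg_polyC.
have E' : forall x, m^`().[x] = (c * m.[x+1] + h.[x+1] * m^`().[x+1])
                                 - (c * m.[x] + h.[x] * m^`().[x]).
  move=> x; have := congr1 (fun p => p^`().[x]) HD.
  rewrite /= deriv_Dl Dl_horner derivM hd !hornerE => e.
  by rewrite -{1}e.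
set u := (-1 - d) / c.
have hu : forall x, x != u -> h.[x] + 1 != 0.
  move=> x; apply: contra_neqN => /eqP e; rewrite hE in e.
  have cx : c * x = -1 - d by rewrite -[RHS]addr0 -e; ring.
  by rewrite /u -cx; field.
have F1 : forall r, root m r -> r - 1 != u -> root m (r - 1).
  move=> r /eqP mr ru; apply/eqP; have := E (r - 1).
  rewrite subrK mr mulr0 sub0r => e.
  have : m.[r-1] * (h.[r-1] + 1) = 0 by rewrite mulrDr mulr1 {2}e; ring.
  by move/eqP; rewrite mulf_eq0 (negPf (hu _ ru)) orbF => /eqP.
have G1 : forall r, root m r -> exists k, r = u + 1 + k%:R.
  move=> r mr.
  have L : forall j, (forall i, (i <= j)%N -> root m (r - i%:R)) \/ exists k, r = u + 1 + k%:R.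
    elim=> [|j [IH|IH]]; last by right.
      by left => i; rewrite leqn0 => /eqP ->; rewrite subr0.
    have [e|ne] := eqVneq (r - j%:R - 1) u.
      by right; exists j; rewrite -e; ring.
    left => i; rewrite leq_eqVlt => /orP[/eqP ->|]; last exact: IH.
    by have := F1 _ (IH j (leqnn j)) ne; rewrite -addn1 natrD opprD addrA.
  case: (L (size m)) => // all.
  have := @roots_chain F charF0 m r (-1) (size m).+1 m0 (ltac:(by rewrite oppr_eq0 oner_eq0)).
  move=> H; have : ((size m).+1 < size m)%N.
    by apply: H => j jm; rewrite mulN1r; exact: all.
  by move/ltnW; rewrite ltnn.
have nS : forall k : nat, (k.+1)%:R != 0 :> F by move=> k; exact: natr_neq0.
have nU : forall k : nat, u + 1 + k%:R != u.
  move=> k; apply/eqP => e; have : (k.+1)%:R = (u + 1 + k%:R) - u :> F.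
    by rewrite -addn1 natrD; ring.
  by rewrite e subrr; apply/eqP; exact: nS.
have G2 : forall k j, root m (u + 1 + k%:R) -> (j <= k)%N -> root m (u + 1 + j%:R).
  elim=> [|k IH] j mk.
    by rewrite leqn0 => /eqP ->.
  rewrite leq_eqVlt => /orP[/eqP ->//|]; rewrite ltnS; apply: IH.
  have := F1 _ mk; rewrite -addn1 natrD.
  have -> : u + 1 + (k%:R + 1) - 1 = u + 1 + k%:R by ring.
  by apply.
have Bd : forall k, root m (u + 1 + k%:R) -> (k < size m)%N.
  move=> k mk; apply: ltnW.
  apply: (@roots_chain F charF0 m (u+1) 1 k.+1 m0 (oner_neq0 _)) => j jk.
  by rewrite mul1r; apply: G2 mk _.
have hu1 : h.[u] = -1 by rewrite hE /u; field.
have G3 : forall r, root m r -> m^`().[r] != 0.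
  move=> r mr; have [k ek] := G1 _ mr; rewrite ek in mr *; clear ek r; move: mr.
  elim: k => [|k IH] mk; apply/eqP => md.
    have e := E' u; move: mk md; rewrite addr0 => /eqP mk md.
    rewrite mk md hu1 in e.
    have : c * m.[u] = 0.
      move: e; set X := m^`().[u] => e.
      by rewrite -(subrr X) {2}e; ring.
    move/eqP; rewrite mulf_eq0 (negPf c0) /= => mu.
    have [k' ek'] := G1 _ mu.
    by move: (nU k'); rewrite -ek' eqxx.
  have ms : root m (u + 1 + k%:R) by apply: G2 mk _; apply: leqnSn.
  have e := E' (u + 1 + k%:R).
  have ee : u + 1 + k%:R + 1 = u + 1 + k.+1%:R by rewrite -addn1 natrD; ring.
  rewrite ee in e.
  move: mk md; move/eqP => mk md.
  rewrite mk md (eqP ms) in e.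
  have : m^`().[u + 1 + k%:R] * (h.[u + 1 + k%:R] + 1) = 0.
    move: e; set X := m^`().[u + 1 + k%:R]; set Y := h.[u + 1 + k%:R] => e.
    by rewrite mulrDr mulr1 {2}e; ring.
  move/eqP; rewrite mulf_eq0 (negPf (hu _ (nU k))) orbF => /eqP md'.
  by move: (IH ms); rewrite md' eqxx.
split=> //.
have G4 : root m 0 \/ root m (-1).
  move: H0; rewrite hornerM => /eqP; rewrite mulf_eq0 => /orP[/eqP h0|]; last by left.
  have d0 : d = 0 by move: h0; rewrite hE mulr0 addr0.
  right; case: (boolP (root m (-1))) => // n1; exfalso.
  have up : forall r, root m r -> root m (r + 1).
    move=> r /eqP mr; have := E r; rewrite mr mulr0 subr0 => /esym/eqP.
    rewrite mulf_eq0 => /orP[|//]; rewrite hE d0 add0r mulf_eq0 (negPf c0) /=.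
    move=> /eqP r1; have : r = -1 by rewrite -[r](addrK 1) r1 sub0r.
    by move=> rm; move: n1; rewrite -rm /root mr eqxx.
  have : size m != 1 by rewrite neq_ltn sm orbT.
  move/closed_rootP => [r0 mr0].
  have ch : forall j : nat, root m (r0 + j%:R).
    elim=> [|j IH]; first by rewrite addr0.
    by rewrite -addn1 natrD addrA; apply: up.
  have := @roots_chain F charF0 m r0 1 (size m) m0 (oner_neq0 _).
  by rewrite ltnn => /(_ _)/notF; apply => j _; rewrite mul1r.
have [w [mw w01]] : exists w, root m w /\ (w = 0 \/ w = -1).
  by case: G4 => hw; [exists 0|exists (-1)]; split=> //; [left|right].
have [k0 hk0] := G1 _ mw.
pose P := fun k => root m (u + 1 + k%:R).
have exP : exists k, P k by exists k0; rewrite /P -hk0.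
have ubP : forall k, P k -> (k <= size m)%N by move=> k /Bd /ltnW.
case: (ex_maxnP exP ubP) => kmax Pk maxk.
have chr : forall x, root m x <-> exists j, (j <= kmax)%N /\ x = u + 1 + j%:R.
  move=> x; split.
    by move=> mx; have [j ej] := G1 _ mx; exists j; split=> //; apply: maxk; rewrite /P -ej.
  by move=> [j [jk ->]]; apply: G2 Pk jk.
have k0k : (k0 <= kmax)%N by apply: maxk; rewrite /P -hk0.
case: w01 => ew; rewrite ew in hk0.
  exists k0, (kmax - k0)%N; left => x; rewrite -chain_Sint // chr.
  have U : u + 1 = - k0%:R by rewrite -[LHS]subr0 hk0; ring.
  by split => [[j [jk ->]]|[j [jk ->]]]; exists j; split=> //; rewrite U addrC.
have U : u + 1 = -1 - k0%:R by rewrite hk0; ring.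
exists (kmax - k0)%N, k0; right => x; rewrite chr.
rewrite -{2}(subKn k0k) -chain_Sint ?leq_subr //.
split => [[j [jk ->]]|[j [jk e]]].
  exists (kmax - j)%N; split; first exact: leq_subr.
  by rewrite !natrB // U; ring.
exists (kmax - j)%N; split; first exact: leq_subr.
have -> : x = - (- x - 1) - 1 by ring.
by rewrite e U !natrB //; ring.
Qed.



Fixpoint Bp (F : fieldType) (k : nat) : {poly F} :=
  if k is k'.+1 then (k'.+1%:R)^-1 *: (Bp F k' * ('X - (k'%:R)%:P)) else 1.

Lemma Bp_size (F : fieldType) (charF0 : [pchar F] =i pred0) k : size (Bp F k) = k.+1.
Proof.
elim: k => [|k IH] /=; first by rewrite size_poly1.
have B0 : Bp F k != 0 by rewrite -size_poly_gt0 IH.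
rewrite size_scale ?invr_eq0 ?natr_neq0 // size_mul ?B0 ?IH ?size_XsubC ?addn2 //.
by rewrite -size_poly_eq0 size_XsubC.
Qed.



Lemma Bp_0 (F : fieldType) k : (Bp F k.+1).[0] = 0.
Proof.
elim: k => [|k IH]; first by rewrite /= hornerZ hornerM hornerXsubC subrr mulr0 mulr0.
by rewrite [Bp F _.+2]/= hornerZ hornerM IH mul0r mulr0.
Qed.

Lemma Dl_XsubC (F : fieldType) (p : {poly F}) a :
  Dl (p * ('X - a%:P)) = p + Dl p * ('X + 1 - a%:P).
Proof.
rewrite /Dl comp_polyM comp_polyB comp_polyX comp_polyC; ring.
Qed.

Lemma Dl_add (F : fieldType) (p q : {poly F}) : Dl (p + q) = Dl p + Dl q.
Proof. rewrite /Dl comp_polyD; ring. Qed.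

Lemma Bp_S (F : fieldType) (charF0 : [pchar F] =i pred0) k :
  Dl (Bp F k) * ('X + 1 - (k%:R)%:P) = k%:R *: Bp F k.
Proof.
have step : forall k, Dl (Bp F k) * ('X + 1 - (k%:R)%:P) = k%:R *: Bp F k ->
    Dl (Bp F k.+1) = Bp F k.
  move=> j Sj; rewrite [Bp F j.+1]/= Dl_scale Dl_XsubC Sj.
  rewrite -{1}[Bp F j]scale1r -scalerDl [1 + _]addrC scalerA natr1 mulVf ?scale1r //.
  exact: natr_neq0.
elim: k => [|k IH].
  by rewrite /= /Dl comp_polyC subrr mul0r scale0r.
rewrite (step _ IH) [Bp F k.+1]/= scalerA mulfV ?natr_neq0 // scale1r.
by congr (_ * _); rewrite -natr1 polyCD polyC1; ring.
Qed.

Lemma Bp_Dl (F : fieldType) (charF0 : [pchar F] =i pred0) k :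
  Dl (Bp F k.+1) = Bp F k.
Proof.
rewrite [Bp F k.+1]/= Dl_scale Dl_XsubC Bp_S //.
rewrite -{1}[Bp F k]scale1r -scalerDl [1 + _]addrC scalerA natr1 mulVf ?scale1r //.
exact: natr_neq0.
Qed.



Lemma R_Bp (F : fieldType) (charF0 : [pchar F] =i pred0) n (R1 : 'M[F]_n.+1 -> 'M[F]_n.+1)
  (hD : forall x y, R1 (x + y) = R1 x + R1 y) (hZ : forall c x, R1 (c *: x) = c *: R1 x)
  (hRB : forall x y, R1 x * R1 y = R1 (R1 x * y + x * R1 y + x * y)) k :
  R1 (horner_mx (R1 1) (Bp F k)) = horner_mx (R1 1) (Bp F k.+1).
Proof.
set A := R1 1.
have BS : forall j, Bp F j.+1 = j.+1%:R^-1 *: (Bp F j * ('X - (j%:R)%:P)) by [].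
have B1 : Bp F 1 = 'X by rewrite /= invr1 scale1r mul1r subr0.
elim: k => [|k IH]; first by rewrite B1 horner_mx_X rmorph1.
have := hRB 1 (horner_mx A (Bp F k)); rewrite -/A IH !mul1r.
have pe : 'X * Bp F k + Bp F k.+1 + Bp F k =
    k.+2%:R *: Bp F k.+1 + k.+1%:R *: Bp F k.
  rewrite [Bp F k.+1]/= -[k.+2%:R]natr1 scalerDl scale1r scalerA mulfV ?natr_neq0 // scale1r.
  rewrite -!mul_polyC -!natr1 !rmorphD /= polyC1; ring.
have eA : A * horner_mx A (Bp F k) = horner_mx A ('X * Bp F k) by rewrite rmorphM /= horner_mx_X.
have harg : A * horner_mx A (Bp F k) + horner_mx A (Bp F k.+1) + horner_mx A (Bp F k) =
    k.+2%:R *: horner_mx A (Bp F k.+1) + k.+1%:R *: horner_mx A (Bp F k).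
  by rewrite eA -!rmorphD pe rmorphD /= !horner_mxZ.
rewrite harg => e; rewrite hD (hZ k.+2%:R) (hZ k.+1%:R (horner_mx A (Bp F k))) IH in e.
apply: (@scalerI _ _ (k.+2%:R) (natr_neq0 charF0 _)).
have pe2 : k.+2%:R *: Bp F k.+2 = 'X * Bp F k.+1 - k.+1%:R *: Bp F k.+1.
  rewrite (BS k.+1) scalerA mulfV ?natr_neq0 // scale1r.
  by rewrite -!mul_polyC; ring.
have hXB : forall p q, horner_mx A (p - q) = horner_mx A p - horner_mx A q by move=> p q; rewrite rmorphB.
have hXM : forall p q, horner_mx A (p * q) = horner_mx A p * horner_mx A q by move=> p q; rewrite rmorphM.
have hXZ : forall c p, horner_mx A (c *: p) = c *: horner_mx A p by move=> c p; rewrite horner_mxZ.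
rewrite -(hXZ k.+2%:R (Bp F k.+2)) pe2 hXB hXM horner_mx_X (hXZ k.+1%:R (Bp F k.+1)) e.
by rewrite addrK.
Qed.



Lemma construct (F : fieldType) (charF0 : [pchar F] =i pred0) n (R1 : 'M[F]_n.+1 -> 'M[F]_n.+1)
  (hD : forall x y, R1 (x + y) = R1 x + R1 y) (hZ : forall c x, R1 (c *: x) = c *: R1 x)
  (hRB : forall x y, R1 x * R1 y = R1 (R1 x * y + x * R1 y + x * y)) N :
  forall f : {poly F}, (size f <= N)%N -> exists g, [/\ Dl g = f, g.[0] = 0,
     (size g <= N.+1)%N & R1 (horner_mx (R1 1) f) = horner_mx (R1 1) g].
Proof.
set A := R1 1.
have R0 : R1 0 = 0 by have := hZ 0 0; rewrite !scale0r.
have hXZ : forall c p, horner_mx A (c *: p) = c *: horner_mx A p by move=> c p; rewrite horner_mxZ.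
have hXD : forall p q, horner_mx A (p + q) = horner_mx A p + horner_mx A q by move=> p q; rewrite rmorphD.
elim: N => [|N IH] f sf.
  move: sf; rewrite size_poly_leq0 => /eqP ->.
  exists 0; split; rewrite ?size_poly0 ?horner0 ?rmorph0 ?R0 //.
  by rewrite /Dl comp_poly0 subrr.
case: (leqP (size f) N) => sfN.
  by have [g [g1 g2 g3 g4]] := IH f sfN; exists g; split=> //; apply: leqW.
have sfe : size f = N.+1 by apply/eqP; rewrite eqn_leq sf sfN.
have BN0 : lead_coef (Bp F N) != 0.
  by rewrite lead_coef_eq0 -size_poly_gt0 Bp_size.
set c := lead_coef f / lead_coef (Bp F N).
have sf' : (size (f - c *: Bp F N)%R <= N)%N.
  apply/leq_sizeP => j jN; rewrite coefB coefZ.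
  case: (ltnP N j) => jN2.
    by rewrite !nth_default ?mulr0 ?subr0 ?sfe ?Bp_size.
  have -> : j = N by apply/eqP; rewrite eqn_leq jN jN2.
  have e1 : f`_N = lead_coef f by rewrite lead_coefE sfe.
  have e2 : (Bp F N)`_N = lead_coef (Bp F N) by rewrite lead_coefE Bp_size.
  by rewrite e1 e2 /c mulfVK // subrr.
have [g' [g1 g2 g3 g4]] := IH _ sf'.
exists (g' + c *: Bp F N.+1); split.
- by rewrite Dl_add Dl_scale Bp_Dl // g1 subrK.
- by rewrite hornerD hornerZ Bp_0 g2 mulr0 addr0.
- rewrite (leq_trans (size_polyD _ _)) // geq_max (leq_trans g3) //.
  by rewrite (leq_trans (size_scale_leq _ _)) // Bp_size.
- rewrite -{1}(subrK (c *: Bp F N) f).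
  by rewrite hXD hD g4 (hXZ c (Bp F N)) hZ R_Bp // hXD (hXZ c).
Qed.



Lemma uniq_sqfree (F : fieldType) (zs : seq F) :
  (forall r, root (\prod_(z <- zs) ('X - z%:P)) r ->
             (\prod_(z <- zs) ('X - z%:P))^`().[r] != 0) -> uniq zs.
Proof.
elim: zs => [//|z zs IH] H /=.
have D : forall r, (\prod_(w <- z :: zs) ('X - w%:P))^`().[r] =
   (\prod_(w <- zs) ('X - w%:P)).[r] + (r - z) * (\prod_(w <- zs) ('X - w%:P))^`().[r].
  by move=> r; rewrite big_cons derivM derivXsubC mul1r !hornerE.
apply/andP; split.
  apply/negP => zz.
  have rz : root (\prod_(w <- z :: zs) ('X - w%:P)) z by rewrite root_prod_XsubC mem_head.
  move: (H _ rz); rewrite D subrr mul0r addr0.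
  by have := root_prod_XsubC zs z; rewrite zz /root => /eqP ->; rewrite eqxx.
apply: IH => r rr.
have rr' : root (\prod_(w <- z :: zs) ('X - w%:P)) r.
  by rewrite root_prod_XsubC inE -root_prod_XsubC rr orbT.
move: (H _ rr'); rewrite D (eqP rr) add0r.
by apply: contraNneq => ->; rewrite mulr0.
Qed.


Lemma diag_transfer (F : fieldType) n (M D : 'M[F]_n) lam p q (f : F -> F) :
  (forall i, M i i = lam * f (D i i)) ->
  (forall y, (exists i, D i i = y) <-> Sint p q (f y)) ->
  (forall k : int, exists y, f y = k%:~R) -> diag_set_is M lam p q.
Proof.
move=> HM HD Hf x; split.
  move=> [i <-]; have [k [k1 [k2 ek]]] := (HD (D i i)).1 (ex_intro _ i erefl).
  by exists k; split=> //; split=> //; rewrite HM ek mulrC.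
move=> [k [k1 [k2 ->]]]; have [y fy] := Hf k.
have [i Di] := (HD y).2 (ex_intro _ k (conj k1 (conj k2 fy))).
by exists i; rewrite HM Di fy mulrC.
Qed.

End Helpers.
Import Helpers.

Unset Implicit Arguments.

(* M_n(F) with n >= 1 is written 'M[F]_n.+1. *)
Theorem theorem11 (F : closedFieldType) (charF0 : [pchar F] =i pred0)
    (n : nat) (lam : F) (lam_neq0 : lam != 0)
    (R : {linear 'M[F]_n.+1 -> 'M[F]_n.+1}) (hR : is_RB lam R) :
  exists (psi psiinv : 'M[F]_n.+1 -> 'M[F]_n.+1),
    is_alg_aut psi psiinv /\
    is_diag_mx (conjRB psiinv R psi 1) /\
    exists p q : nat,
      diag_set_is (conjRB psiinv R psi 1) lam p q \/
      diag_set_is (conjRB psiinv (phiRB lam R) psi 1) lam p q.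
Proof.
pose R1 := fun x : 'M[F]_n.+1 => lam^-1 *: R x.
have hD : forall x y, R1 (x + y) = R1 x + R1 y by move=> x y; rewrite /R1 linearD scalerDr.
have hZ : forall c x, R1 (c *: x) = c *: R1 x.
  by move=> c x; rewrite /R1 linearZ !scalerA mulrC.
have hRB : forall x y, R1 x * R1 y = R1 (R1 x * y + x * R1 y + x * y).
  move=> x y; rewrite /R1 -scalerAl -scalerAr scalerA hR -scalerAl -scalerAr.
  rewrite !linearD !linearZ /= !scalerA; congr (_ + _ + _); congr (_ *: _); field.
  exact: lam_neq0.
set A1 := R1 1.
set m := mxminpoly A1.
have sm : (1 < size m)%N by rewrite size_mxminpoly ltnS mxminpoly_nonconstant.
have [g [g1 g2 g3 g4]] := construct charF0 hD hZ hRB (leqnn (size m)).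
have gm : m %| g.
  apply: mxminpoly_min; rewrite -g4 mx_root_minpoly.
  by have := hZ 0 0; rewrite !scale0r.
have [h gh] := dvdpP _ _ gm.
have sh : size h = 2 by apply: (h_shape sm gh g1 g3).
rewrite gh in g1 g2.
have [sqf [p [q Hpq]]] := roots_main charF0 sm sh g1 g2.
have [zs mzs] := closed_field_poly_normal m.
have lm : lead_coef m = 1 by apply/monicP; exact: mxminpoly_monic.
rewrite lm scale1r in mzs.
have uzs : uniq zs by apply: uniq_sqfree; rewrite -mzs.
have [P Punit Pdiag] : diagonalizable A1.
  by apply/diagonalizableP; exists zs => //; rewrite -/m -mzs.
have mP := diagonalizable_for_mxminpoly Punit Pdiag.
set D := conjmx P A1 in mP Pdiag.
have rootD : forall y, root m y <-> exists i, D i i = y.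
  move=> y; rewrite /m mP root_prod_XsubC mem_undup; split.
    by move=> /mapP[i _ ->]; exists i.
  by move=> [i <-]; apply/mapP; exists i; rewrite ?mem_enum.
have DE : D = P *m A1 *m invmx P by rewrite /D conjumx.
have R1E : R 1 = lam *: A1 by rewrite /A1 /R1 scalerA mulfV // scale1r.
have PD : P *m (lam *: A1) *m invmx P = lam *: D by rewrite DE scalemxAl scalemxAr.
exists (fun x => invmx P *m x *m P), (fun x => P *m x *m invmx P).
split; [split|split].
- move=> a u v; rewrite mulmxDr mulmxDl -scalemxAr -scalemxAl //.
- split; first by rewrite /= mulmx1 mulVmx.
  by move=> x y /=; rewrite -!mulmxE !mulmxA mulmxK.
- by move=> x; rewrite !mulmxA mulmxV // mul1mx -mulmxA mulmxV // mulmx1.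
- by move=> x; rewrite !mulmxA mulVmx // mul1mx -mulmxA mulVmx // mulmx1.
- rewrite /conjRB mulmx1 mulVmx // R1E -scalemxAr -scalemxAl -DE.
  apply/is_diag_mxP => i j ij; rewrite mxE.
  by move/is_diag_mxP: Pdiag => /(_ i j ij) ->; rewrite mulr0.
exists p, q; case: Hpq => Hpq; [left|right].
  apply: (@diag_transfer _ _ _ D _ _ _ id).
  - by move=> i; rewrite /conjRB mulmx1 mulVmx // R1E -scalemxAr -scalemxAl -DE mxE.
  - by move=> y; rewrite -rootD Hpq.
  - by move=> k; exists k%:~R.
apply: (@diag_transfer _ _ _ D _ _ _ (fun y => - y - 1)).
- move=> i; rewrite /conjRB /phiRB mulmx1 mulVmx // R1E.
  rewrite mulmxBr mulmxBl mulmxN mulNmx PD -scalemxAr -scalemxAl mulmx1 mulmxV //.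
  by rewrite !mxE eqxx mulr1n; ring.
- by move=> y; rewrite -rootD Hpq.
- by move=> k; exists (- k%:~R - 1); ring.
Qed.
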